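(* Let $G=(V_1,E_1)$ and $H=(V_2,E_2)$ be digraphs. If both $G$ and $H$ satisfy one of the following properties, then so do $G\mathbin{\dot\cup}H$ and $G\mathbin{\overline{\cup}}H$: (1) congruence $n$-permutability for some $n$; (2) congruence modularity; (3) the Hobby–McKenzie property.
   Context: Digraphs are finite and loopless. $G\mathbin{\dot\cup}H$ is the disjoint union digraph; $G\mathbin{\overline{\cup}}H$ is the same structure with two additional unary relations interpreted as $V_1$ and $V_2$. Polymorphisms of a structure are maps from tuples to elements preserving every relation coordinatewise; a structure has a property if it has polymorphisms satisfying the indicated equations for all values of the variables. Congruence $n$-permutable: ternary polymorphisms $p_0,\dots,p_n$ with $p_0(x,y,z)=x$, $p_i(x,x,y)=p_{i+1}(x,y,y)$ for $i<n$, $p_n(x,y,z)=z$. Congruence modular: ternary polymorphisms $s_0,\dots,s_{2n},p$ with $s_0(x,y,z)=x$, $s_i(x,y,x)=x$, $s_i(x,y,y)=s_{i+1}(x,y,y)$ for even $i<2n$, $s_i(x,x,y)=s_{i+1}(x,x,y)$ for odd $i<2n$, $s_{2n}(x,y,y)=p(x,y,y)$, $p(x,x,y)=y$. Hobby–McKenzie: there are $n\ge0$ and idempotent ternary polymorphisms $d_0,\dots,d_n,p,e_0,\dots,e_n$ with $x=d_0(x,y,z)$, $e_n(x,y,z)=z$; $d_i(x,y,y)=d_{i+1}(x,y,y)$ and $e_i(x,y,y)=e_{i+1}(x,y,y)$ for even $i<n$; $d_i(x,x,y)=d_{i+1}(x,x,y)$ and $e_i(x,x,y)=e_{i+1}(x,x,y)$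 for odd $i<n$; $d_n(x,y,y)=p(x,y,y)$ and $p(x,x,y)=e_0(x,x,y)$; $d_i(x,y,x)=d_{i+1}(x,y,x)$ for odd $i<n$ and $e_j(x,y,x)=e_{j+1}(x,y,x)$ for even $j<n$. *)

(* Defs.v *)
From Stdlib Require List.
From mathcomp Require Import all_boot.
Set Implicit Arguments. Unset Strict Implicit. Unset Printing Implicit Defensive.

Record struct := Struct {
  car :> finType;
  edge : rel car;
  unaries : seq (pred car) }.

Definition digraph (V : finType) (E : rel V) : struct := Struct E [::].

Definition loopless (V : finType) (E : rel V) : Prop := irreflexive E.

Definition sum_edge (V1 V2 : finType) (E1 : rel V1) (E2 : rel V2) : rel (V1 + V2)%type :=
  fun u v => match u, v with
             | inl a, inl b => E1 a b
             | inr a, inr b => E2 a b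
             | _, _ => false
             end.

Definition dunion (V1 V2 : finType) (E1 : rel V1) (E2 : rel V2) : struct :=
  @Struct (V1 + V2)%type (sum_edge E1 E2) [::].

Definition in_left (V1 V2 : finType) : pred (V1 + V2)%type :=
  fun u => if u is inl _ then true else false.
Definition in_right (V1 V2 : finType) : pred (V1 + V2)%type :=
  fun u => if u is inr _ then true else false.

Definition ounion (V1 V2 : finType) (E1 : rel V1) (E2 : rel V2) : struct :=
  @Struct (V1 + V2)%type (sum_edge E1 E2) [:: @in_left V1 V2; @in_right V1 V2].

Definition op3 (A : struct) := A -> A -> A -> A.

Definition poly3 (A : struct) (f : op3 A) : Prop :=
  (forall x1 y1 x2 y2 x3 y3 : A,
      edge x1 y1 -> edge x2 y2 -> edge x3 y3 ->
      edge (f x1 x2 x3) (f y1 y2 y3)) /\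
  (forall U, List.In U (unaries A) -> forall x1 x2 x3 : A,
      U x1 -> U x2 -> U x3 -> U (f x1 x2 x3)).

Definition idempotent3 (A : struct) (f : op3 A) : Prop := forall x : A, f x x x = x.

Definition n_permutable (A : struct) (n : nat) : Prop :=
  exists p : nat -> op3 A,
    (forall i, i <= n -> poly3 (p i)) /\
    (forall x y z : A, p 0 x y z = x) /\
    (forall i, i < n -> forall x y : A, p i x x y = p i.+1 x y y) /\
    (forall x y z : A, p n x y z = z).

Definition congruence_permutable (A : struct) : Prop := exists n, n_permutable A n.

(* congruence modular (Gumm terms) *)
Definition congruence_modular (A : struct) : Prop :=
  exists (n : nat) (s : nat -> op3 A) (p : op3 A),
    (forall i, i <= n.*2 -> poly3 (s i)) /\ poly3 p /\
    (forall x y z : A, s 0 x y z = x) /\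
    (forall i, i <= n.*2 -> forall x y : A, s i x y x = x) /\
    (forall i, i < n.*2 -> ~~ odd i -> forall x y : A, s i x y y = s i.+1 x y y) /\
    (forall i, i < n.*2 -> odd i -> forall x y : A, s i x x y = s i.+1 x x y) /\
    (forall x y : A, s n.*2 x y y = p x y y) /\
    (forall x y : A, p x x y = y).

Definition hobby_mckenzie (A : struct) : Prop :=
  exists (n : nat) (d : nat -> op3 A) (p : op3 A) (e : nat -> op3 A),
    (forall i, i <= n -> poly3 (d i) /\ idempotent3 (d i)) /\
    (forall i, i <= n -> poly3 (e i) /\ idempotent3 (e i)) /\
    poly3 p /\ idempotent3 p /\
    (forall x y z : A, d 0 x y z = x) /\
    (forall x y z : A, e n x y z = z) /\
    (forall i, i < n -> ~~ odd i -> forall x y : A,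
        d i x y y = d i.+1 x y y /\ e i x y y = e i.+1 x y y) /\
    (forall i, i < n -> odd i -> forall x y : A,
        d i x x y = d i.+1 x x y /\ e i x x y = e i.+1 x x y) /\
    (forall x y : A, d n x y y = p x y y) /\
    (forall x y : A, p x x y = e 0 x x y) /\
    (forall i, i < n -> odd i -> forall x y : A, d i x y x = d i.+1 x y x) /\
    (forall j, j < n -> ~~ odd j -> forall x y : A, e j x y x = e j.+1 x y x).

(* Main.v *)
Require Import Defs.
From mathcomp Require Import all_boot.
From mathcomp Require Import zify.
From Stdlib Require List.
Set Implicit Arguments. Unset Strict Implicit. Unset Printing Implicit Defensive.

Section S.
Variables (V1 V2 : finType) (E1 : rel V1) (E2 : rel V2).

Definition pick3 (k : nat) (a b c : (V1 + V2)%type) :=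
  if k == 0 then a else if k == 1 then b else c.

Definition sd (u : (V1 + V2)%type) : bool := if u is inl _ then true else false.

Definition comb (f : V1 -> V1 -> V1 -> V1) (g : V2 -> V2 -> V2 -> V2)
  (ch : bool -> bool -> bool -> nat) (a b c : (V1 + V2)%type) : (V1 + V2)%type :=
  match a, b, c with
  | inl a', inl b', inl c' => inl (f a' b' c')
  | inr a', inr b', inr c' => inr (g a' b' c')
  | _, _, _ => pick3 (ch (sd a) (sd b) (sd c)) a b c
  end.

Lemma comb_poly (f : op3 (digraph E1)) (g : op3 (digraph E2)) ch :
  poly3 f -> poly3 g ->
  poly3 (A := dunion E1 E2) (comb f g ch) /\ poly3 (A := ounion E1 E2) (comb f g ch).
Proof.
move=> [hf _] [hg _].
have He : forall x1 y1 x2 y2 x3 y3 : (V1 + V2)%type,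
   sum_edge E1 E2 x1 y1 -> sum_edge E1 E2 x2 y2 -> sum_edge E1 E2 x3 y3 ->
   sum_edge E1 E2 (comb f g ch x1 x2 x3) (comb f g ch y1 y2 y3).
  move=> [a1|a1] [b1|b1] [a2|a2] [b2|b2] [a3|a3] [b3|b3] //= e1 e2 e3;
  try (by apply: hf); try (by apply: hg);
  rewrite /pick3; case: ifP => _ //; case: ifP => _ //.
split; split => //.
move=> U /= [<-|[<-|[]]] [x1|x1] [x2|x2] [x3|x3] //.
Qed.



Definition chP (N i : nat) (sa sb sc : bool) : nat :=
  if i == 0 then 0 else if i == N then 2
  else if (i == N.-1) && (sa == sb) then 2 else 0.

Lemma chP_l N i sa sb (x y : (V1 + V2)%type) : 1 < N -> i < N -> sa != sb ->
  pick3 (chP N i sa sa sb) x x y = if i == N.-1 then y else x.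
Proof.
move=> hN hi hs; rewrite /chP /pick3 eqxx andbT.
have [->|i0] := eqVneq i 0.
  by rewrite (_ : (0 == N.-1) = false) //; apply/eqP; lia.
rewrite (_ : (i == N) = false); last by apply/eqP; lia.
by case: (i == N.-1).
Qed.

Lemma chP_r N i sa sb (x y : (V1 + V2)%type) : 1 < N -> i < N -> sa != sb ->
  pick3 (chP N i.+1 sa sb sb) x y y = if i == N.-1 then y else x.
Proof.
move=> hN hi hs; rewrite /chP /pick3 (negbTE hs) andbF /=.
have [e|ne] := eqVneq i.+1 N.
  by rewrite (_ : i == N.-1); last by apply/eqP; lia.
by rewrite (_ : (i == N.-1) = false) //; apply/eqP; lia.
Qed.

Definition chQ (sa sb sc : bool) : nat := if sa == sb then 2 else 0.

End S.

Lemma perm_pad (A : struct) n m : n_permutable A n -> n <= m -> n_permutable A m.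
Proof.
move=> [p [hp [h0 [hs hn]]]] nm.
exists (fun i => p (minn i n)); split; [|split; [|split]].
- by move=> i _; apply: hp; apply: geq_minr.
- by move=> x y z; rewrite min0n.
- move=> i im x y /=.
  have [lt|ge] := ltnP i n.
    by rewrite (minn_idPl lt); apply: hs.
  by rewrite (minn_idPr (leqW ge)) !hn.
- by move=> x y z; rewrite (minn_idPr nm).
Qed.

Lemma mod_pad (A : struct) n m s p :
  (forall i, i <= n.*2 -> poly3 (s i)) /\ poly3 p /\
    (forall x y z : A, s 0 x y z = x) /\
    (forall i, i <= n.*2 -> forall x y : A, s i x y x = x) /\
    (forall i, i < n.*2 -> ~~ odd i -> forall x y : A, s i x y y = s i.+1 x y y) /\
    (forall i, i < n.*2 -> odd i -> forall x y : A, s i x x y = s i.+1 x x y) /\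
    (forall x y : A, s n.*2 x y y = p x y y) /\
    (forall x y : A, p x x y = y) -> n <= m ->
  let s' := fun i => s (minn i n.*2) in
  (forall i, i <= m.*2 -> poly3 (s' i)) /\ poly3 p /\
    (forall x y z : A, s' 0 x y z = x) /\
    (forall i, i <= m.*2 -> forall x y : A, s' i x y x = x) /\
    (forall i, i < m.*2 -> ~~ odd i -> forall x y : A, s' i x y y = s' i.+1 x y y) /\
    (forall i, i < m.*2 -> odd i -> forall x y : A, s' i x x y = s' i.+1 x x y) /\
    (forall x y : A, s' m.*2 x y y = p x y y) /\
    (forall x y : A, p x x y = y).
Proof.
move=> [hp [hq [h0 [h1 [h2 [h3 [h4 h5]]]]]]] nm s'.
have nm2 : n.*2 <= m.*2 by rewrite leq_double.
rewrite /s'; split; [|split; [|split; [|split; [|split; [|split; [|split]]]]]] => //.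
- by move=> i _; apply: hp; apply: geq_minr.
- by move=> x y z; rewrite min0n.
- by move=> i _ x y; apply: h1; apply: geq_minr.
- move=> i _ oi x y.
  have [lt|ge] := ltnP i n.*2.
    by rewrite (minn_idPl lt); apply: h2.
  by rewrite (minn_idPr (leqW ge)).
- move=> i _ oi x y.
  have [lt|ge] := ltnP i n.*2.
    by rewrite (minn_idPl lt); apply: h3.
  by rewrite (minn_idPr (leqW ge)).
- by move=> x y; rewrite (minn_idPr nm2).
Qed.

Lemma hm_pad (A : struct) n m (d : nat -> op3 A) (p : op3 A) e :
    (forall i, i <= n -> poly3 (d i) /\ idempotent3 (d i)) /\
    (forall i, i <= n -> poly3 (e i) /\ idempotent3 (e i)) /\
    poly3 p /\ idempotent3 p /\
    (forall x y z : A, d 0 x y z = x) /\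
    (forall x y z : A, e n x y z = z) /\
    (forall i, i < n -> ~~ odd i -> forall x y : A,
        d i x y y = d i.+1 x y y /\ e i x y y = e i.+1 x y y) /\
    (forall i, i < n -> odd i -> forall x y : A,
        d i x x y = d i.+1 x x y /\ e i x x y = e i.+1 x x y) /\
    (forall x y : A, d n x y y = p x y y) /\
    (forall x y : A, p x x y = e 0 x x y) /\
    (forall i, i < n -> odd i -> forall x y : A, d i x y x = d i.+1 x y x) /\
    (forall j, j < n -> ~~ odd j -> forall x y : A, e j x y x = e j.+1 x y x) ->
  n <= m ->
  let d' := fun i => d (minn i n) in let e' := fun i => e (minn i n) in
    (forall i, i <= m -> poly3 (d' i) /\ idempotent3 (d' i)) /\
    (forall i, i <= m -> poly3 (e' i) /\ idempotent3 (e' i)) /\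
    poly3 p /\ idempotent3 p /\
    (forall x y z : A, d' 0 x y z = x) /\
    (forall x y z : A, e' m x y z = z) /\
    (forall i, i < m -> ~~ odd i -> forall x y : A,
        d' i x y y = d' i.+1 x y y /\ e' i x y y = e' i.+1 x y y) /\
    (forall i, i < m -> odd i -> forall x y : A,
        d' i x x y = d' i.+1 x x y /\ e' i x x y = e' i.+1 x x y) /\
    (forall x y : A, d' m x y y = p x y y) /\
    (forall x y : A, p x x y = e' 0 x x y) /\
    (forall i, i < m -> odd i -> forall x y : A, d' i x y x = d' i.+1 x y x) /\
    (forall j, j < m -> ~~ odd j -> forall x y : A, e' j x y x = e' j.+1 x y x).
Proof.
move=> [hd [he [hp [ip [h0 [hn [h1 [h2 [h3 [h4 [h5 h6]]]]]]]]]]] nm d' e'.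
rewrite /d' /e'.
split; [|split; [|split; [|split; [|split; [|split; [|split; [|split; [|split; [|split; [|split]]]]]]]]]] => //.
- by move=> i _; apply: hd; apply: geq_minr.
- by move=> i _; apply: he; apply: geq_minr.
- by move=> x y z; rewrite min0n.
- by move=> x y z; rewrite (minn_idPr nm).
- move=> i _ oi x y.
  have [lt|ge] := ltnP i n.
    by rewrite (minn_idPl lt); apply: h1.
  by rewrite (minn_idPr (leqW ge)).
- move=> i _ oi x y.
  have [lt|ge] := ltnP i n.
    by rewrite (minn_idPl lt); apply: h2.
  by rewrite (minn_idPr (leqW ge)).
- by move=> x y; rewrite (minn_idPr nm).
- by move=> x y; rewrite min0n.
- move=> i _ oi x y.
  have [lt|ge] := ltnP i n.
    by rewrite (minn_idPl lt); apply: h5.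
  by rewrite (minn_idPr (leqW ge)).
- move=> i _ oi x y.
  have [lt|ge] := ltnP i n.
    by rewrite (minn_idPl lt); apply: h6.
  by rewrite (minn_idPr (leqW ge)).
Qed.

Section T.
Variables (V1 V2 : finType) (E1 : rel V1) (E2 : rel V2).

Lemma perm_sum : congruence_permutable (digraph E1) -> congruence_permutable (digraph E2) ->
  congruence_permutable (dunion E1 E2) /\ congruence_permutable (ounion E1 E2).
Proof.
move=> [n1 h1] [n2 h2]; set N := n1 + n2 + 2.
have N2 : 1 < N by rewrite /N; lia.
have N0 : (N == 0) = false by apply/eqP; lia.
have le1 : n1 <= N by rewrite /N; lia.
have le2 : n2 <= N by rewrite /N; lia.
have [p1 [hp1 [a1 [b1 c1]]]] := perm_pad h1 le1.
have [p2 [hp2 [a2 [b2 c2]]]] := perm_pad h2 le2.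
split; exists N; exists (fun i => comb (p1 i) (p2 i) (chP N i)); (split; [|split;[|split]]).
all: try (by move=> i hi; case: (comb_poly (chP N i) (hp1 i hi) (hp2 i hi))).
all: try (by move=> [x|x] [y|y] [z|z]; cbn [comb sd]; rewrite ?a1 ?a2).
all: try (by move=> [x|x] [y|y] [z|z]; cbn [comb sd]; rewrite ?c1 ?c2 // /pick3 /chP N0 eqxx).
all: by move=> i hi [x|x] [y|y]; cbn [comb sd]; rewrite ?b1 ?b2 // chP_l // chP_r.
Qed.


Lemma mod_sum : congruence_modular (digraph E1) -> congruence_modular (digraph E2) ->
  congruence_modular (dunion E1 E2) /\ congruence_modular (ounion E1 E2).
Proof.
move=> [n1 [s1 [q1 H1]]] [n2 [s2 [q2 H2]]]; set N := n1 + n2.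
have le1 : n1 <= N by rewrite /N; lia.
have le2 : n2 <= N by rewrite /N; lia.
have := mod_pad H1 le1 => /= [[hs1 [hq1 [a1 [b1 [c1 [d1 [e1 f1]]]]]]]].
have := mod_pad H2 le2 => /= [[hs2 [hq2 [a2 [b2 [c2 [d2 [e2 f2]]]]]]]].
split; exists N; exists (fun i => comb (s1 (minn i n1.*2)) (s2 (minn i n2.*2)) (fun _ _ _ => 0));
  exists (comb q1 q2 chQ); (split; [|split; [|split; [|split; [|split; [|split; [|split]]]]]]).
all: try (by move=> i hi; case: (comb_poly (fun _ _ _ => 0) (hs1 i hi) (hs2 i hi))).
all: try (by case: (comb_poly chQ hq1 hq2)).
all: try (by move=> [x|x] [y|y] [z|z]; cbn [comb sd]; rewrite ?a1 ?a2).
all: try (by move=> i hi [x|x] [y|y]; cbn [comb sd]; rewrite ?b1 ?b2).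
all: try (by move=> i hi oi [x|x] [y|y]; cbn [comb sd]; first [rewrite c1 // | rewrite c2 // | rewrite d1 // | rewrite d2 // | idtac]).
all: by move=> [x|x] [y|y]; cbn [comb sd]; rewrite ?e1 ?e2 ?f1 ?f2 // /pick3 /chQ /= ?eqxx.
Qed.


Lemma hm_sum : hobby_mckenzie (digraph E1) -> hobby_mckenzie (digraph E2) ->
  hobby_mckenzie (dunion E1 E2) /\ hobby_mckenzie (ounion E1 E2).
Proof.
move=> [n1 [d1 [q1 [e1 H1]]]] [n2 [d2 [q2 [e2 H2]]]]; set N := n1 + n2.
have le1 : n1 <= N by rewrite /N; lia.
have le2 : n2 <= N by rewrite /N; lia.
have := hm_pad H1 le1 => /= [[hd1 [he1 [hq1 [iq1 [a1 [b1 [c1 [f1 [g1 [k1 [l1 m1]]]]]]]]]]]].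
have := hm_pad H2 le2 => /= [[hd2 [he2 [hq2 [iq2 [a2 [b2 [c2 [f2 [g2 [k2 [l2 m2]]]]]]]]]]]].
split; exists N; exists (fun i => comb (d1 (minn i n1)) (d2 (minn i n2)) (fun _ _ _ => 0));
  exists (comb q1 q2 chQ);
  exists (fun i => comb (e1 (minn i n1)) (e2 (minn i n2)) (fun _ _ _ => 2));
  (split; [|split; [|split; [|split; [|split; [|split; [|split; [|split; [|split; [|split; [|split]]]]]]]]]]).
all: try (by move=> i hi; have [P1 I1] := hd1 i hi; have [P2 I2] := hd2 i hi; split;
  [case: (comb_poly (fun _ _ _ => 0) P1 P2) | move=> [x|x] /=; congr inl || congr inr]).
all: try (by move=> i hi; have [P1 I1] := he1 i hi; have [P2 I2] := he2 i hi; split;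
  [case: (comb_poly (fun _ _ _ => 2) P1 P2) | move=> [x|x] /=; congr inl || congr inr]).
all: try (by case: (comb_poly chQ hq1 hq2)).
all: try (by move=> [x|x] /=; [congr inl; apply: iq1 | congr inr; apply: iq2]).
all: try (by move=> [x|x] [y|y] [z|z]; cbn [comb sd]; rewrite ?a1 ?a2 ?b1 ?b2).
all: try (by move=> i hi oi [x|x] [y|y]; cbn [comb sd];
   [case: (c1 i hi oi x y) => -> -> | | | case: (c2 i hi oi x y) => -> ->]).
all: try (by move=> i hi oi [x|x] [y|y]; cbn [comb sd];
   [case: (f1 i hi oi x y) => -> -> | | | case: (f2 i hi oi x y) => -> ->]).
all: try (by move=> i hi oi [x|x] [y|y]; cbn [comb sd];
   first [rewrite l1 // | rewrite l2 // | rewrite m1 // | rewrite m2 // | idtac]).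
all: by move=> [x|x] [y|y]; cbn [comb sd];
   first [rewrite g1 // | rewrite g2 // | rewrite k1 // | rewrite k2 // | rewrite /pick3 /chQ /= ?eqxx //].
Qed.
End T.

Theorem lemma4p2 (V1 V2 : finType) (E1 : rel V1) (E2 : rel V2)
  (hG : loopless E1) (hH : loopless E2) :
  (congruence_permutable (digraph E1) -> congruence_permutable (digraph E2) ->
     congruence_permutable (dunion E1 E2) /\ congruence_permutable (ounion E1 E2)) /\
  (congruence_modular (digraph E1) -> congruence_modular (digraph E2) ->
     congruence_modular (dunion E1 E2) /\ congruence_modular (ounion E1 E2)) /\
  (hobby_mckenzie (digraph E1) -> hobby_mckenzie (digraph E2) ->
     hobby_mckenzie (dunion E1 E2) /\ hobby_mckenzie (ounion E1 E2)).
Proof.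
split; [exact: perm_sum | split; [exact: mod_sum | exact: hm_sum]].
Qed.
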